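(* Uniformly for all real $\alpha\geqslant 3$ and $x>1$, $$\sum_{p\leqslant x}\frac{1}{(\log p)^\alpha}<(2\alpha)^\alpha\frac{x}{(\log x)^{\alpha+1}},$$ where the sum runs over primes $p$. *)

(* Defs.v *)
From Stdlib Require Import Reals List.
From mathcomp Require Import ssreflect ssrbool ssrnat prime.
Open Scope R_scope.

(* Sum of f p over all primes p with p <= x (p a natural number, x real).
   Every such p lies in [0, up x], since up x > x. *)
Definition sum_primes_le (x : R) (f : nat -> R) : R :=
  fold_right Rplus 0
    (map f (filter (fun n : nat => prime n && (if Rle_dec (INR n) x then true else false))
                   (seq 0 (S (Z.to_nat (up x)))))).

(* Main.v *)
Require Import Defs.
From Stdlib Require Import Reals Lra Lia List ZArith.

Module MC.
From mathcomp Require Import all_boot zify.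
Set Implicit Arguments. Unset Strict Implicit.
Local Open Scope nat_scope.
Lemma prime_dvd_fact_le p n : prime p -> p %| n`! -> p <= n.
Proof.
move=> pp; elim: n => [|n IH].
  by rewrite fact0 dvdn1 => /eqP p1; rewrite p1 in pp.
rewrite factS Euclid_dvdM // => /orP [H|H].
  exact: dvdn_leq H.
by apply: leq_trans (IH H) _.
Qed.

Lemma bin_sum_ge n m : m < n -> 'C(n, m) + 'C(n, m.+1) <= 2 ^ n.
Proof.
move=> lt_mn.
have -> : 2 ^ n = \sum_(i < n.+1) 'C(n, i).
  rewrite -{1}[2]/(1 + 1) expnDn; apply: eq_bigr => i _.
  by rewrite !exp1n !muln1.
rewrite -(big_mkord xpredT (fun i => 'C(n, i))).
rewrite (big_cat_nat (n := m)) //=; last by apply: leq_trans (ltnW lt_mn) _.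
rewrite [X in _ <= _ + X](big_cat_nat (n := m.+2)) //=.

rewrite big_nat_recl // big_nat1.
  by rewrite addnCA leq_addr.
exact: leq_trans (leqnSn m) (leqnSn _).
Qed.

Lemma bin_mid_le m : 'C(m.*2.+1, m) <= 4 ^ m.
Proof.
have H := bin_sum_ge (n := m.*2.+1) (m := m).
have e : 'C(m.*2.+1, m.+1) = 'C(m.*2.+1, m).
  rewrite -(bin_sub (n := m.*2.+1) (m := m)); last by lia.
  congr binomial; lia.
rewrite e addnn in H.
have : (('C(m.*2.+1, m)).*2 <= (4 ^ m).*2).
  apply: leq_trans (H _) _; first by lia.
  by rewrite expnS -!mul2n expnM.
by rewrite leq_double.
Qed.

Definition primorial n := \prod_(0 <= p < n.+1 | prime p) p.

Lemma Q_dvd m : \prod_(m.+2 <= p < m.*2.+2 | prime p) p %| 'C(m.*2.+1, m).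
Proof.
have hP : 'C(m.*2.+1, m) * m`! = \prod_(m.+2 <= k < m.*2.+2) k.
  have h1 := @bin_fact (m.*2.+1) m.
  have h2 := @fact_split (m.*2.+1) m.+1.
  have e : m.*2.+1 - m = m.+1 by lia.
  rewrite e in h1.
  apply/eqP; rewrite -(eqn_pmul2l (fact_gt0 m.+1)).
  rewrite -h2; last by lia.
  rewrite -h1; last by lia.
  by rewrite mulnC -mulnA.
have hcop : coprime (\prod_(m.+2 <= p < m.*2.+2 | prime p) p) m`!.
  rewrite big_nat_cond.
  apply: (big_ind (fun q => coprime q m`!)).
  - exact: coprime1n.
  - by move=> a b ha hb; rewrite coprimeMl ha hb.
  move=> p /andP [/andP [hp1 hp2] pp].
  rewrite prime_coprime //; apply/negP => /(prime_dvd_fact_le pp) hle.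
  lia.
rewrite -(Gauss_dvdl 'C(m.*2.+1, m) hcop) hP.
rewrite [X in _ %| X](bigID prime) /=.
exact: dvdn_mulr.
Qed.

Lemma primorial_bound n : primorial n <= 4 ^ n.
Proof.
elim: n {-2}n (leqnn n) => [|N IH] n hn.
  by move: hn; rewrite leqn0 => /eqP ->; rewrite /primorial unlock.
case: n hn => [|n] hn.
  by rewrite /primorial unlock.
case: n hn => [|n] hn.
  by rewrite /primorial unlock.
case: n hn => [|n] hn.
  by rewrite /primorial unlock.
have hN : n.+3 <= N.+1 := hn.
case/boolP: (odd n.+3) => hodd.
- set m := n.+3./2.
  have em : n.+3 = m.*2.+1.
    by rewrite -[in LHS](odd_double_half n.+3) hodd /= add1n.
  have hm1 : m.+1 <= N by lia.
  have h1 := IH m.+1 hm1.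
  rewrite /primorial em.
  rewrite (big_cat_nat (n := m.+2)) //=; last by lia.
  have h2 := Q_dvd m.
  have h3 : \prod_(m.+2 <= p < m.*2.+2 | prime p) p <= 4 ^ m.
    apply: leq_trans (bin_mid_le m).
    by apply: dvdn_leq; rewrite ?bin_gt0 //; lia.
  have -> : 4 ^ m.*2.+1 = 4 ^ m.+1 * 4 ^ m by rewrite -expnD; congr (_ ^ _); lia.
  exact: leq_mul.
- have hnp : ~~ prime n.+3.
    apply/negP => pp.
    case: (even_prime pp) => [//|h]; by rewrite h in hodd.
  rewrite /primorial big_mkcond big_nat_recr //= (negbTE hnp) muln1 -big_mkcond.
  apply: leq_trans (IH n.+2 _) _; first by lia.
  by rewrite leq_exp2l.
Qed.

Lemma seq_iota a k : List.seq a k = iota a k.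
Proof. by elim: k a => //= k IH a; rewrite IH. Qed.

Lemma filter_eqL (f : nat -> bool) l : List.filter f l = filter f l.
Proof. by elim: l => //= x l IH; rewrite IH. Qed.

Lemma prod_fold l : \prod_(i <- l) i = List.fold_right Nat.mul 1%N l.
Proof. elim: l => [|x l IH]; first by rewrite big_nil. by rewrite big_cons IH. Qed.

Lemma expn_pow m n : expn m n = Nat.pow m n.
Proof. by elim: n => [|n IH] //; rewrite expnS IH. Qed.

Lemma primorial_list n :
  primorial n = List.fold_right Nat.mul 1%N (List.filter prime (List.seq 0 n.+1)).
Proof.
rewrite /primorial -big_filter prod_fold filter_eqL seq_iota.
by rewrite /index_iota subn0.
Qed.

Lemma primorial_le n : (List.fold_right Nat.mul 1%N (List.filter prime (List.seq 0 n.+1))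
   <= Nat.pow 4 n)%coq_nat.
Proof. apply/leP; rewrite -primorial_list -expn_pow; exact: primorial_bound. Qed.

Lemma prime_ge2 n : prime n = true -> (2 <= n)%coq_nat.
Proof. by move=> h; apply/leP; apply: prime_gt1. Qed.

End MC.
Open Scope R_scope.

Notation primeb := mathcomp.boot.prime.prime.


Lemma exp_n s n : exp (INR n * s) = exp s ^ n.
Proof.
induction n as [|n IH].
- simpl. rewrite Rmult_0_l. apply exp_0.
- rewrite S_INR, Rmult_plus_distr_r, Rmult_1_l, exp_plus, IH. simpl. ring.
Qed.

Lemma exp_lower t n : (0 < n)%nat -> 0 <= t -> (1 + t / INR n) ^ n <= exp t.
Proof.
intros hn ht.
assert (hN : 0 < INR n) by (apply lt_0_INR; lia).
replace t with (INR n * (t / INR n)) at 2 by (field; lra).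
rewrite exp_n. apply pow_incr. split.
- assert (0 <= t / INR n) by (unfold Rdiv; apply Rmult_le_pos; [lra|left; apply Rinv_0_lt_compat; lra]). lra.
- apply exp_ineq1_le.
Qed.

Lemma exp_upper t n : (0 < n)%nat -> 0 <= t -> t < INR n -> exp t <= (1 / (1 - t / INR n)) ^ n.
Proof.
intros hn ht htn.
assert (hN : 0 < INR n) by (apply lt_0_INR; lia).
assert (hs : t / INR n < 1) by (apply (Rmult_lt_reg_r (INR n)); [lra|]; unfold Rdiv; rewrite Rmult_assoc, Rinv_l; lra).
replace t with (INR n * (t / INR n)) at 1 by (field; lra).
rewrite exp_n. apply pow_incr. split.
- left; apply exp_pos.
- set (s := t / INR n) in *.
  assert (h1 : 1 + - s <= exp (- s)) by apply exp_ineq1_le.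
  rewrite exp_Ropp in h1.
  assert (0 < exp s) by apply exp_pos.
  unfold Rdiv. rewrite Rmult_1_l.
  apply Rinv_le_contravar in h1; [|lra].
  rewrite Rinv_inv in h1. unfold Rminus. lra.
Qed.

Lemma INR64 : INR 64 = 64. Proof. simpl. lra. Qed.
Lemma INR128 : INR 128 = 128. Proof. simpl. lra. Qed.

Lemma ln_le_of_exp c t : 0 < c -> c <= exp t -> ln c <= t.
Proof.
intros hc h. destruct (Rle_lt_or_eq_dec _ _ h) as [h'|h'].
- left. rewrite <- (ln_exp t). apply ln_increasing; lra.
- rewrite h', ln_exp. lra.
Qed.

Lemma ln_ge_of_exp c t : exp t <= c -> t <= ln c.
Proof.
intros h. assert (0 < exp t) by apply exp_pos.
destruct (Rle_lt_or_eq_dec _ _ h) as [h'|h'].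
- left. rewrite <- (ln_exp t) at 1. apply ln_increasing; lra.
- rewrite <- h', ln_exp. lra.
Qed.

Lemma N1 : 0.69 <= ln 2.
Proof.
apply ln_ge_of_exp.
eapply Rle_trans. apply (exp_upper 0.69 128); [lia|lra|rewrite INR128; lra].
rewrite INR128. simpl. lra.
Qed.

Lemma N2 : ln 2 <= 0.7.
Proof.
apply ln_le_of_exp; [lra|].
eapply Rle_trans; [|apply (exp_lower 0.7 64); [lia|lra]].
rewrite INR64. simpl. lra.
Qed.

Lemma exp_low64 t : 0 <= t -> (1 + t / 64) ^ 64 <= exp t.
Proof. intros ht. rewrite <- INR64. apply exp_lower; [lia|lra]. Qed.

Lemma low64 c t : 0 < c -> 0 <= t -> c <= (1 + t / 64) ^ 64 -> ln c <= t.
Proof. intros hc ht h. apply ln_le_of_exp; [exact hc|]. eapply Rle_trans; [apply h|].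
apply exp_low64; exact ht. Qed.
Lemma low128 c t : 0 < c -> 0 <= t -> c <= (1 + t / 128) ^ 128 -> ln c <= t.
Proof. intros hc ht h. apply ln_le_of_exp; [exact hc|]. eapply Rle_trans; [apply h|].
rewrite <- INR128. apply exp_lower; [lia|exact ht]. Qed.

Lemma N3 : ln (5/3) <= 0.515.
Proof. apply low128; [lra|lra|simpl; lra]. Qed.
Lemma N5 : ln 3 <= 1.105.
Proof. apply low128; [lra|lra|simpl; lra]. Qed.
Lemma N7 : ln (5/2) <= 0.93.
Proof. apply low128; [lra|lra|simpl; lra]. Qed.
Lemma N8 : 1.09 <= ln 3.
Proof.
apply ln_ge_of_exp.
eapply Rle_trans. apply (exp_upper 1.09 128); [lia|lra|rewrite INR128; lra].
rewrite INR128. simpl. lra.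
Qed.
Lemma N4 : -0.375 <= ln (ln 2).
Proof.
apply ln_ge_of_exp.
assert (h : 1/0.69 <= exp 0.375).
{ eapply Rle_trans; [|apply exp_low64; lra]. simpl. lra. }
replace (-0.375) with (-(0.375)) by lra. rewrite exp_Ropp. pose proof N1. assert (0 < exp 0.375) by apply exp_pos.
assert (h2 : / exp 0.375 <= / (1/0.69)) by (apply Rinv_le_contravar; [lra|exact h]).
assert (e : / (1/0.69) = 0.69) by (field; lra). rewrite e in h2. lra.
Qed.
Lemma N6 : -0.42 <= ln 0.68.
Proof.
apply ln_ge_of_exp.
assert (h : 1/0.68 <= exp 0.42).
{ eapply Rle_trans; [|apply exp_low64; lra]. simpl. lra. }
replace (-0.42) with (-(0.42)) by lra. rewrite exp_Ropp. assert (0 < exp 0.42) by apply exp_pos.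
replace 0.68 with (/ (1/0.68)) by (field; lra).
apply Rinv_le_contravar; [lra|exact h].
Qed.
Lemma N9 : exp (-1.6) <= 0.21.
Proof.
assert (h : 1/0.21 <= exp 1.6).
{ eapply Rle_trans; [|apply exp_low64; lra]. simpl. lra. }
replace (-1.6) with (-(1.6)) by lra. rewrite exp_Ropp. assert (0 < exp 1.6) by apply exp_pos.
replace 0.21 with (/ (1/0.21)) by (field; lra).
apply Rinv_le_contravar; [lra|exact h].
Qed.

Lemma ln_le_sub1 v : 0 < v -> ln v <= v - 1.
Proof. intros hv. pose proof (exp_ineq1_le (ln v)). rewrite exp_ln in H; lra. Qed.

Lemma exp_le_mono x y : x <= y -> exp x <= exp y.
Proof. intros h. destruct (Rle_lt_or_eq_dec _ _ h) as [h'|h'].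
- left; apply exp_increasing; exact h'.
- rewrite h'; lra. Qed.

Lemma ln_le_mono x y : 0 < x -> x <= y -> ln x <= ln y.
Proof. intros hx h. destruct (Rle_lt_or_eq_dec _ _ h) as [h'|h'].
- left; apply ln_increasing; lra.
- rewrite h'; lra. Qed.

Lemma final a L : 3 <= a -> 0 < L ->
  1 / Rpower (ln 2) a * exp (2/5*L) + 1 / Rpower (2/5*L) (a+1) * (exp L * ln 4)
  < Rpower (2*a) a * (exp L / Rpower L (a+1)).
Proof.
intros ha hL. unfold Rpower.
pose proof N1 as n1. pose proof N2 as n2. pose proof N3 as n3. pose proof N4 as n4.
pose proof N5 as n5. pose proof N6 as n6. pose proof N7 as n7. pose proof N8 as n8.
pose proof N9 as n9.
assert (hl4 : ln 4 = 2 * ln 2).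
{ replace 4 with (2*2) by lra. rewrite ln_mult; lra. }
assert (h2a : ln (2*a) = ln 2 + ln a) by (apply ln_mult; lra).
assert (h25 : ln (2/5*L) = - ln (5/2) + ln L).
{ rewrite ln_mult; [|lra|lra]. replace (2/5) with (/ (5/2)) by (field; lra).
  rewrite ln_Rinv; lra. }
assert (h35 : ln (3/5) = - ln (5/3)).
{ replace (3/5) with (/ (5/3)) by (field; lra). rewrite ln_Rinv; lra. }
set (l2 := ln 2) in *. set (ll := ln l2) in *. set (u := ln L) in *.
set (la := ln a) in *. set (la1 := ln (a+1)) in *.
assert (hla3 : ln 3 <= la) by (apply ln_le_mono; lra).
assert (F1 : (a+1) * (ln (3/5) + u - la1) <= 3/5 * L - (a+1)).
{ assert (hv : 0 < 3/5 * L * / (a+1)).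
  { apply Rmult_lt_0_compat; [lra|apply Rinv_0_lt_compat; lra]. }
  pose proof (ln_le_sub1 _ hv) as h.
  rewrite ln_mult in h; [|lra|apply Rinv_0_lt_compat; lra].
  rewrite ln_mult in h; [|lra|lra]. rewrite ln_Rinv in h; [|lra].
  fold u la1 in h.
  apply (Rmult_le_compat_l (a+1)) in h; [|lra].
  replace ((a+1) * (3/5 * L * / (a+1) - 1)) with (3/5*L - (a+1)) in h by (field; lra).
  lra. }
assert (F2 : (a+1) * (la1 - la) <= (a+1) * (1/a)).
{ apply Rmult_le_compat_l; [lra|].
  assert (hv : 0 < (a+1) * / a) by (apply Rmult_lt_0_compat; [lra|apply Rinv_0_lt_compat; lra]).
  pose proof (ln_le_sub1 _ hv) as h.
  rewrite ln_mult in h; [|lra|apply Rinv_0_lt_compat; lra]. rewrite ln_Rinv in h; [|lra].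
  fold la1 la in h.
  replace ((a+1) * / a - 1) with (1/a) in h by (field; lra). lra. }
assert (F3 : la - ln 3 <= a/3 - 1).
{ assert (hv : 0 < a * / 3) by lra.
  pose proof (ln_le_sub1 _ hv) as h.
  rewrite ln_mult in h; [|lra|lra]. rewrite ln_Rinv in h; [|lra]. fold la in h. lra. }
assert (hw : (a+1) * (1/a) = 1 + 1/a) by (field; lra).
assert (hw3 : 1/a <= 1/3).
{ unfold Rdiv. rewrite !Rmult_1_l. apply Rinv_le_contravar; lra. }
assert (E1 : 2/5*L - a*ll <= ln 0.68 + (a*(l2+la) + L - (a+1)*u)).
{ assert (0 <= a * (ll + 0.375)) by (apply Rmult_le_pos; lra).
  assert (0 <= a * (l2 - 0.69)) by (apply Rmult_le_pos; lra).
  assert (0 <= a * (0.515 - ln (5/3))) by (apply Rmult_le_pos; lra).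
  nra. }
assert (E2 : L - (a+1)*(- ln (5/2) + u) <= -1.6 + (a*(l2+la) + L - (a+1)*u)).
{ assert (0 <= a * (0.93 - ln (5/2))) by (apply Rmult_le_pos; lra).
  assert (0 <= a * (l2 - 0.69)) by (apply Rmult_le_pos; lra).
  assert (0 <= a * (la - 1.09)) by (apply Rmult_le_pos; lra).
  nra. }
set (X := a*(l2+la) + L - (a+1)*u) in *.
assert (eR : exp (a * (l2 + la)) * (exp L / exp ((a+1)*u)) = exp X).
{ unfold X. unfold Rminus. rewrite !exp_plus, exp_Ropp. unfold Rdiv. ring. }
assert (eA : 1 / exp (a * ll) * exp (2/5*L) = exp (2/5*L - a*ll)).
{ unfold Rminus. rewrite exp_plus, exp_Ropp. field. apply exp_neq_0. }
assert (eB : 1 / exp ((a+1) * (- ln (5/2) + u)) * (exp L * ln 4)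
             = ln 4 * exp (L - (a+1)*(- ln (5/2) + u))).
{ unfold Rminus. rewrite exp_plus, exp_Ropp. field. apply exp_neq_0. }
rewrite h2a, h25, eA, eB, eR.
apply exp_le_mono in E1. apply exp_le_mono in E2.
rewrite exp_plus, exp_ln in E1 by lra. rewrite exp_plus in E2.
assert (0 < exp X) by apply exp_pos.
assert (0 < exp (L - (a + 1) * (- ln (5 / 2) + u))) by apply exp_pos.
assert (exp (-1.6) * exp X <= 0.21 * exp X) by (apply Rmult_le_compat_r; lra).
assert (ln 4 * exp (L - (a + 1) * (- ln (5 / 2) + u)) <= 1.4 * (0.21 * exp X)).
{ apply Rmult_le_compat; lra. }
lra.
Qed.

Definition sumL (f : nat -> R) (l : list nat) : R := fold_right Rplus 0 (map f l).

Lemma sumL_app f l1 l2 : sumL f (l1 ++ l2) = sumL f l1 + sumL f l2.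
Proof. induction l1 as [|a l1 IH]; unfold sumL in *; simpl; [lra|rewrite IH; lra]. Qed.

Lemma sumL_le f g l : (forall n, In n l -> f n <= g n) -> sumL f l <= sumL g l.
Proof.
induction l as [|a l IH]; intros h; unfold sumL in *; simpl; [lra|].
apply Rplus_le_compat; [apply h; left; reflexivity|apply IH; intros n hn; apply h; right; exact hn].
Qed.

Lemma sumL_lin c1 c2 g1 g2 l :
  sumL (fun n => c1 * g1 n + c2 * g2 n) l = c1 * sumL g1 l + c2 * sumL g2 l.
Proof. induction l as [|a l IH]; unfold sumL in *; simpl; [ring|rewrite IH; ring]. Qed.

Lemma count_le y : 0 <= y -> forall k,
  sumL (fun n => if Rle_dec (INR n) y then 1 else 0) (filter primeb (seq 0 k)) <= Rmax 0 (INR k - 1)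
  /\ sumL (fun n => if Rle_dec (INR n) y then 1 else 0) (filter primeb (seq 0 k)) <= y.
Proof.
intros hy k. induction k as [|k [IH1 IH2]].
- simpl. unfold sumL; simpl. unfold Rmax; destruct (Rle_dec 0 (0 - 1)); lra.
- rewrite seq_S, filter_app, sumL_app, S_INR. replace (0 + k)%nat with k by lia.
  cbn [filter].
  set (S0 := sumL _ (filter primeb (seq 0 k))) in *.
  destruct (primeb k) eqn:hp.
  + pose proof (MC.prime_ge2 hp) as hk. apply le_INR in hk. simpl in hk.
    unfold sumL; simpl.
    destruct (Rle_dec (INR k) y) as [hky|hky];
    unfold Rmax in *; destruct (Rle_dec 0 (INR k - 1)); destruct (Rle_dec 0 (INR k + 1 - 1)); lra.
  + unfold sumL; simpl.
    unfold Rmax in *; destruct (Rle_dec 0 (INR k - 1)); destruct (Rle_dec 0 (INR k + 1 - 1)); lra.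
Qed.

Lemma prod_pos l : (forall n, In n l -> (0 < n)%nat) -> (0 < fold_right Nat.mul 1%nat l)%nat.
Proof.
induction l as [|a l IH]; intros h; simpl; [lia|].
assert (0 < a)%nat by (apply h; left; reflexivity).
assert (0 < fold_right Nat.mul 1%nat l)%nat by (apply IH; intros n hn; apply h; right; exact hn).
apply Nat.mul_pos_pos; assumption.
Qed.

Lemma ln_prod l : (forall n, In n l -> (0 < n)%nat) ->
  ln (INR (fold_right Nat.mul 1%nat l)) = sumL (fun n => ln (INR n)) l.
Proof.
induction l as [|a l IH]; intros h; unfold sumL in *; simpl.
- apply ln_1.
- assert (ha : (0 < a)%nat) by (apply h; left; reflexivity).
  assert (hl : forall n, In n l -> (0 < n)%nat) by (intros n hn; apply h; right; exact hn).
  pose proof (prod_pos l hl) as hp.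
  rewrite mult_INR, ln_mult; [rewrite IH; [reflexivity|exact hl]| |];
  apply lt_0_INR; assumption.
Qed.

Lemma theta_le m :
  sumL (fun n => ln (INR n)) (filter primeb (seq 0 (S m))) <= INR m * ln 4.
Proof.
assert (hpos : forall n, In n (filter primeb (seq 0 (S m))) -> (0 < n)%nat).
{ intros n hn. apply filter_In in hn. destruct hn as [_ hn].
  pose proof (MC.prime_ge2 hn). lia. }
rewrite <- (ln_prod _ hpos).
pose proof (MC.primorial_le m) as hb.
pose proof (prod_pos _ hpos) as hp.
apply le_INR in hb. rewrite pow_INR in hb. simpl (INR 4) in hb.
rewrite <- ln_pow by lra.
apply ln_le_mono; [apply lt_0_INR; exact hp|].
replace (1 + 1 + 1 + 1) with 4 in hb by ring. exact hb.
Qed.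

Lemma filter_x (g : nat -> bool) N :
  g N = false -> (forall n, (n < N)%nat -> g n = true) ->
  filter (fun n => primeb n && g n)%bool (seq 0 (S N)) = filter primeb (seq 0 N).
Proof.
intros hN hlt. rewrite seq_S, filter_app. simpl. rewrite hN, Bool.andb_false_r, app_nil_r.
apply filter_ext_in. intros a ha. apply in_seq in ha. rewrite hlt by lia.
apply Bool.andb_true_r.
Qed.

Theorem lemma5 (alpha x : R) (halpha : 3 <= alpha) (hx : 1 < x) :
  sum_primes_le x (fun p => 1 / Rpower (ln (INR p)) alpha)
  < Rpower (2 * alpha) alpha * (x / Rpower (ln x) (alpha + 1)).
Proof.
assert (hL : 0 < ln x) by (rewrite <- ln_1; apply ln_increasing; lra).
destruct (archimed x) as [hup1 hup2].
assert (hz : (1 < up x)%Z) by (apply lt_IZR; lra).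
assert (hN : INR (Z.to_nat (up x)) = IZR (up x)).
{ rewrite INR_IZR_INZ, Z2Nat.id; [reflexivity|lia]. }
set (N := Z.to_nat (up x)) in *.
assert (hN2 : (2 <= N)%nat) by (unfold N; lia).
unfold sum_primes_le. fold N.
erewrite filter_x.
3:{ intros n hn.
    assert (INR (S n) <= INR N) by (apply le_INR; lia).
    rewrite S_INR, hN in H.
    destruct (Rle_dec (INR n) x) as [h|h]; [reflexivity|lra]. }
2:{ destruct (Rle_dec (INR N) x) as [h|h]; [lra|reflexivity]. }
fold (sumL (fun p => 1 / Rpower (ln (INR p)) alpha) (filter primeb (seq 0 N))).
set (l := filter primeb (seq 0 N)).
set (L := ln x) in *.
set (y := exp (2/5*L)).
set (K1 := 1 / Rpower (ln 2) alpha).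
set (K2 := 1 / Rpower (2/5*L) (alpha+1)).
set (ind := fun n => if Rle_dec (INR n) y then 1 else 0).
assert (hl2 : / 2 < ln 2) by apply ln_lt_2.
assert (hK1 : 0 <= K1).
{ unfold K1, Rpower. unfold Rdiv. rewrite Rmult_1_l. left; apply Rinv_0_lt_compat, exp_pos. }
assert (hK2 : 0 <= K2).
{ unfold K2, Rpower. unfold Rdiv. rewrite Rmult_1_l. left; apply Rinv_0_lt_compat, exp_pos. }
assert (hpt : forall n, In n l -> 1 / Rpower (ln (INR n)) alpha <= K1 * ind n + K2 * ln (INR n)).
{ intros n hn. unfold l in hn. apply filter_In in hn. destruct hn as [_ hp].
  pose proof (MC.prime_ge2 hp) as h2. apply le_INR in h2. simpl in h2.
  assert (hln : ln 2 <= ln (INR n)) by (apply ln_le_mono; lra).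
  assert (hP : 0 < Rpower (ln (INR n)) alpha) by (unfold Rpower; apply exp_pos).
  unfold ind. destruct (Rle_dec (INR n) y) as [hy|hy].
  - assert (Rpower (ln 2) alpha <= Rpower (ln (INR n)) alpha) by (apply Rle_Rpower_l; lra).
    assert (0 < Rpower (ln 2) alpha) by (unfold Rpower; apply exp_pos).
    assert (1 / Rpower (ln (INR n)) alpha <= K1).
    { unfold K1, Rdiv. rewrite !Rmult_1_l. apply Rinv_le_contravar; lra. }
    assert (0 <= K2 * ln (INR n)) by (apply Rmult_le_pos; lra).
    lra.
  - assert (hy2 : 2/5*L < ln (INR n)).
    { unfold y in hy. rewrite <- (ln_exp (2/5*L)). apply ln_increasing; [apply exp_pos|lra]. }
    assert (hQ : Rpower (2/5*L) (alpha+1) <= Rpower (ln (INR n)) (alpha+1))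
      by (apply Rle_Rpower_l; lra).
    rewrite (Rpower_plus alpha 1 (ln (INR n))), (Rpower_1 (ln (INR n))) in hQ by lra.
    assert (0 < Rpower (2/5*L) (alpha+1)) by (unfold Rpower; apply exp_pos).
    assert (1 / Rpower (ln (INR n)) alpha = ln (INR n) * / (Rpower (ln (INR n)) alpha * ln (INR n)))
      by (field; lra).
    rewrite H0. unfold K2.
    assert (/ (Rpower (ln (INR n)) alpha * ln (INR n)) <= / Rpower (2/5*L) (alpha+1))
      by (apply Rinv_le_contravar; lra).
    assert (ln (INR n) * / (Rpower (ln (INR n)) alpha * ln (INR n))
            <= ln (INR n) * / Rpower (2/5*L) (alpha+1)) by (apply Rmult_le_compat_l; lra).
    unfold Rdiv. lra. }
apply sumL_le in hpt.
rewrite sumL_lin in hpt.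
destruct (count_le y ltac:(unfold y; left; apply exp_pos) N) as [_ hc].
assert (hN1 : N = S (N - 1)) by lia.
pose proof (theta_le (N - 1)) as ht. rewrite <- hN1 in ht.
rewrite minus_INR in ht by lia. simpl (INR 1) in ht.
assert (hl4 : 0 < ln 4) by (rewrite <- ln_1; apply ln_increasing; lra).
fold l in hc, ht.
assert (K1 * sumL ind l <= K1 * y) by (apply Rmult_le_compat_l; [exact hK1|exact hc]).
assert (sumL (fun n => ln (INR n)) l <= x * ln 4).
{ eapply Rle_trans; [exact ht|]. apply Rmult_le_compat_r; lra. }
assert (K2 * sumL (fun n => ln (INR n)) l <= K2 * (x * ln 4)) by (apply Rmult_le_compat_l; lra).
pose proof (final alpha L halpha hL) as hf.
unfold L in hf. rewrite exp_ln in hf by lra. fold L in hf.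
fold y K1 K2 in hf.
lra.
Qed.
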